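(* Let $(S_n,X_n)_{n\ge0}$ be an alternating non-homogeneous semi-Markov process with $S_0=1$, $X_0=0$ and Gamma semi-Markov kernels with shape functions $k_Y,k_Z$ taking values in $[1,\infty)$ and rate functions $\lambda_Y,\lambda_Z$ taking values in $(0,\infty)$, all measurable, such that $\lambda_Y(x)\le c$ and $\lambda_Z(x)\le c$ for all $x\ge0$ for some $c>0$. Then its renewal function satisfies $M(t)\le ct$ for all $t\ge 0$.
   Context: Let $(S_n,X_n)_{n\ge0}$ be random variables on a probability space with $S_n\in\{0,1\}$, $0=X_0\le X_1\le X_2\le\cdots$, $S_0=1$, and alternating states: $S_n=1$ for even $n$ and $S_n=0$ for odd $n$. Write $T_{n+1}=X_{n+1}-X_n$. The process is called an alternating non-homogeneous semi-Markov process with semi-Markov kernels $G_Y,G_Z$ if for every $n\ge 0$ the conditional distribution of $T_{n+1}$ given $(S_0,X_0),\dots,(S_n,X_n)$ depends only on $(S_n,X_n)$ (and not on $n$), with $\mathbb P(T_{n+1}\le \tau\mid S_n=1,X_n=x)=G_Y(x,\tau)$ and $\mathbb P(T_{n+1}\le\tau\mid S_n=0,X_n=x)=G_Z(x,\tau)$ for all $x,\tau\ge 0$; here for each $x\ge0$, $G_Y(x,\cdot)$ and $G_Z(x,\cdot)$ are distribution functions on $[0,\infty)$, jointly measurable in $(x,\tau)$, absolutely continuous with densities $g_Y(x,\cdot)$, $g_Z(x,\cdot)$. ''Gamma semi-Markov kernels with shape $k_T$ and rate $\lambda_T$'' means $g_T(x,\tau)=\lambda_T(x)^{k_T(x)}\tau^{k_T(x)-1}e^{-\lambda_T(x)\tau}/\Gamma(k_T(x))$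 for $\tau\ge 0$, $T\in\{Y,Z\}$. The cycle-counting process is $N(t)=\sup\{n\in\mathbb N_0: X_{2n}\le t\}$ and the renewal function is $M(t)=\mathbb E N(t)=\sum_{n=1}^\infty \mathbb P(X_{2n}\le t)$, $t\ge0$. *)

(* Defs.v *)
From HB Require Import structures.
From mathcomp Require Import all_boot all_order all_algebra.
From mathcomp Require Import all_classical all_reals all_analysis.
Set Implicit Arguments. Unset Strict Implicit. Unset Printing Implicit Defensive.
Import Order.TTheory GRing.Theory Num.Theory.
Local Open Scope classical_set_scope.
Local Open Scope ring_scope.

Section Defs.
Variable R : realType.

Definition GammaF (k : R) : R :=
  fine (\int[lebesgue_measure]_(t in `[0%R, +oo[%classic)
          (powR t (k - 1) * expR (- t))%:E)%E.

Definition gamma_density (k lam tau : R) : R :=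
  if (0 <= tau) then powR lam k * powR tau (k - 1) * expR (- (lam * tau)) / GammaF k
  else 0.

Definition gamma_kernel (k lam : R -> R) (x tau : R) : \bar R :=
  (\int[lebesgue_measure]_(s in `[0%R, tau]%classic)
      (gamma_density (k x) (lam x) s)%:E)%E.

Definition state (n : nat) : nat := if odd n then 0%N else 1%N.

End Defs.

Section Process.
Context {d : measure_display} {Omega : measurableType d} {R : realType}.

(* History sigma-algebra sigma((S_0,X_0),...,(S_n,X_n)) = sigma(X_0,...,X_n)
   (the S_i are deterministic). *)
Definition history (X : nat -> Omega -> R) (n : nat) : set (set Omega) :=
  <<s [set A | exists i : nat, (i <= n)%N /\
        exists B : set R, measurable B /\ A = X i @^-1` B] >>.

(* Alternating non-homogeneous semi-Markov process with kernels GY, GZ: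
   for every n, the conditional distribution function of
   T_{n+1} = X_{n+1} - X_n given the history up to n is
   G_{S_n}(X_n, .), i.e. for every history event A and tau >= 0,
   P(A /\ T_{n+1} <= tau) = E[1_A G_{S_n}(X_n, tau)]. *)
Definition alt_semi_markov (P : probability Omega R) (X : nat -> Omega -> R)
    (GY GZ : R -> R -> \bar R) : Prop :=
  (forall n, measurable_fun setT (X n)) /\
  (forall w, X 0%N w = 0) /\
  (forall n w, X n w <= X n.+1 w) /\
  (forall (n : nat) (A : set Omega) (tau : R), history X n A -> 0 <= tau ->
     P (A `&` [set w | X n.+1 w - X n w <= tau]) =
     (\int[P]_(w in A)
        (if state n == 1%N then GY (X n w) tau else GZ (X n w) tau))%E).

(* Renewal function M(t) = E N(t) = sum_{n >= 1} P(X_{2n} <= t). *)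
Definition renewal_function (P : probability Omega R) (X : nat -> Omega -> R)
    (t : R) : \bar R :=
  (\sum_(1 <= n <oo) P [set w | (X n.*2 w <= t)%R])%E.

End Process.

(* Main.v *)
Require Import Defs.
From HB Require Import structures.
From mathcomp Require Import all_boot all_order all_algebra.
From mathcomp Require Import all_classical all_reals all_analysis.
From mathcomp Require Import ring lra measurable_realfun.
Set Implicit Arguments. Unset Strict Implicit. Unset Printing Implicit Defensive.
Import Order.TTheory GRing.Theory Num.Theory.
Import numFieldTopology.Exports.
Local Open Scope classical_set_scope.
Local Open Scope ring_scope.
Section G.
Context {R : realType}.
Notation mu := (@lebesgue_measure R).

Lemma powR_cont_pos (r x : R) : 0 < x -> powR u r @[u --> x] --> powR x r.
Proof.
move=> x0.
have -> : powR x r = expR (r * ln x) by rewrite /powR gt_eqF.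
apply: cvg_trans; first (apply: (@near_eq_cvg _ _ _ _ (fun u => expR (r * ln u))); near=> u; rewrite /powR gt_eqF //; near: u; exact: lt_nbhsr).
have h1 : (fun u => r * ln u) @ x --> r * ln x.
  by apply: cvgM; [exact: cvg_cst | exact: continuous_ln].
exact: (continuous_comp h1 (@continuous_expR R _)).
Unshelve. all: end_near. Qed.

Definition gf (k u : R) := powR u (k - 1) * expR (- u).

Lemma cont_expN (x : R) : expR (- u) @[u --> x] --> expR (- x).
Proof.
have h1 : (fun u : R => - u) @ x --> - x by apply: cvgN; exact: cvg_id.
exact: (continuous_comp h1 (@continuous_expR R _)).
Qed.

Lemma gf_within (k : R) : 1 <= k -> {within `[0, +oo[, continuous (gf k)}.
Proof.
move=> k1; apply/continuous_within_itvcyP; split.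
  move=> x; rewrite in_itv /= andbT => x0.
  apply: cvgM; [exact: powR_cont_pos | exact: cont_expN].
have [->|k1'] := eqVneq k 1.
  rewrite /gf subrr.
  under eq_fun do rewrite powRr0.
  rewrite powRr0; apply: cvg_at_right_filter; apply: cvgM; [exact: cvg_cst|exact: cont_expN].
have kp : 0 < k - 1 by rewrite subr_gt0 lt_neqAle eq_sym k1' k1.
rewrite /gf powR0 ?gt_eqF // mul0r.
rewrite -[X in _ --> X](mul0r (expR (- 0))).
apply: cvgM; first exact: (powR_cvg0 kp).
apply: cvg_at_right_filter; exact: cont_expN.
Qed.


Lemma derive1_scale (lam : R) : (fun s : R => lam * s)^`()%classic = cst lam.
Proof.
apply/funext => x.
have := @derive1Ml R id x lam (ltac:(by [])).
rewrite /= => ->; by rewrite derive1_id mulr1.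
Qed.


Lemma gamma_subst (k lam : R) : 1 <= k -> 0 < lam ->
  (\int[mu]_(u in `[0%R, +oo[) (gf k u)%:E =
  \int[mu]_(s in `[0%R, +oo[) (powR lam k * powR s (k - 1) * expR (- (lam * s)))%:E)%E.
Proof.
move=> k1 lam0.
have := @increasing_ge0_integration_by_substitutiony R (fun s => lam * s) (gf k) 0.
rewrite derive1_scale mulr0.
move=> ->.
- apply: eq_integral => s; rewrite inE /= in_itv /= andbT => s0.
  rewrite /gf /=; congr EFin; rewrite /comp /= !fctE.
  rewrite powRM ?(ltW lam0) // -(mulr_powRB1 (ltW lam0) (lt_le_trans ltr01 k1)).
  ring.
- by move=> x y _ _ xy; rewrite ltr_pM2l.
- by move=> x _; exact: cst_continuous.
- exact: is_cvg_cst.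
- exact: is_cvg_cst.
- split; first by move=> x _; exact: derivableM.
  apply: cvg_at_right_filter; apply: cvgM; [exact: cvg_cst | exact: cvg_id].
- by apply: gt0_cvgMry => //; exact: cvg_id.
- exact: gf_within.
- move=> x; rewrite in_itv /= andbT => x0.
  by rewrite /gf mulr_ge0 ?powR_ge0 ?expR_ge0.
Qed.


Definition hg (k lam s : R) := powR lam k * powR s (k - 1) * expR (- (lam * s)).

Lemma measurable_hg k lam : measurable_fun setT (hg k lam).
Proof.
apply: measurable_funM; first apply: measurable_funM => //.
apply: measurableT_comp => //.
apply: measurableT_comp => //; exact: measurable_funM.
Qed.

Lemma hgE k lam s : 1 <= k -> 0 < lam -> 0 <= s ->
  hg k lam s = powR (lam * s) (k - 1) * (lam * expR (- lam * s)).
Proof.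
move=> k1 lam0 s0; rewrite /hg powRM ?(ltW lam0) // mulNr.
rewrite -(mulr_powRB1 (ltW lam0) (lt_le_trans ltr01 k1)); ring.
Qed.

Lemma hg_ge0 k lam s : 0 <= hg k lam s.
Proof. by rewrite /hg !mulr_ge0 ?powR_ge0 ?expR_ge0. Qed.


Lemma mhg k lam (D : set R) : measurable_fun D (fun s => (hg k lam s)%:E).
Proof. apply/measurable_EFinP; apply: measurable_funTS; exact: measurable_hg. Qed.

Lemma I1_le k lam tau : 1 <= k -> 0 < lam -> 0 < tau ->
  (\int[mu]_(s in `[0%R, tau]) (hg k lam s)%:E <=
   (powR (lam * tau) (k - 1) * (1 - expR (- lam * tau)))%:E)%E.
Proof.
move=> k1 lam0 tau0.
set r := powR (lam * tau) (k - 1).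
apply: (@le_trans _ _ (\int[mu]_(s in `[0%R, tau]) (r%:E * (exponential_pdf lam s)%:E))%E).
  apply: ge0_le_integral => //.
  - by move=> x _; rewrite lee_fin hg_ge0.
  - exact: mhg.
  - apply: measurable_funeM; apply/measurable_EFinP; apply: measurable_funTS.
    exact: measurable_exponential_pdf.
  - move=> x; rewrite /= in_itv /= => /andP[x0 xt].
    rewrite hgE // exponential_pdfE // lee_fin ler_wpM2r //.
      by rewrite mulr_ge0 ?expR_ge0 ?(ltW lam0).
    apply: ge0_ler_powR; rewrite ?nnegrE ?mulr_ge0 ?(ltW lam0) ?subr_ge0 //.
      exact: ltW.
    by rewrite ler_wpM2l // ltW.
rewrite ge0_integralZl_EFin //.
- have := exponential_prob_itv0c lam tau0; rewrite /exponential_prob => ->.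
  by rewrite EFinM EFinB.
- by move=> x _; rewrite lee_fin exponential_pdf_ge0 // ltW.
- apply/measurable_EFinP; apply: measurable_funTS; exact: measurable_exponential_pdf.
- by rewrite /r powR_ge0.
Qed.


Lemma exp_tail lam tau : 0 < lam -> 0 <= tau ->
  (\int[mu]_(s in `[tau, +oo[) (lam * expR (- lam * s))%:E = (expR (- lam * tau))%:E)%E.
Proof.
move=> lam0 tau0.
have cE : continuous (fun z : R => expR (- lam * z)).
  move=> z; apply: continuous_comp; last exact: continuous_expR.
  by apply: continuousM => //; exact: cst_continuous.
rewrite (@ge0_continuous_FTC2y R _ (fun x => - expR (- lam * x)) _ 0).
- by rewrite sub0e EFinN oppeK.
- by move=> x _; rewrite mulr_ge0 ?expR_ge0 ?(ltW lam0).
- apply: continuous_subspaceT => x.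
  apply: (@continuousM _ R^o (fun=> lam) (fun x => expR (- lam * x))); [exact: cst_continuous| exact: cE].
- rewrite -oppr0; apply: cvgN.
  rewrite (_ : (fun x => expR (- lam * x)) =
               (fun z => expR (- z)) \o (fun z => lam * z)); last first.
    by apply: eq_fun => x; rewrite mulNr.
  apply: (@cvg_comp _ _ _ _ _ _ (pinfty_nbhs R)); last exact: cvgr_expR.
  by apply: gt0_cvgMry => //; exact: cvg_id.
- by move=> x _; exact: ex_derive.
- by apply: cvgN; apply/cvg_at_right_filter; exact: cE.
- move=> z; rewrite in_itv /= andbT => z0.
  rewrite derive1_exponential_pdf ?exponential_pdfE //.
    by apply: ltW; apply: le_lt_trans z0.
  by rewrite in_itv /= andbT; apply: le_lt_trans z0.
Qed.

Lemma I2_ge k lam tau : 1 <= k -> 0 < lam -> 0 < tau ->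
  ((powR (lam * tau) (k - 1) * expR (- lam * tau))%:E <=
   \int[mu]_(s in `]tau, +oo[) (hg k lam s)%:E)%E.
Proof.
move=> k1 lam0 tau0.
set r := powR (lam * tau) (k - 1).
rewrite integral_itv_obnd_cbnd; last exact: mhg.
rewrite EFinM -exp_tail //; last exact: ltW.
rewrite -ge0_integralZl_EFin //.
- apply: ge0_le_integral => //.
  + move=> x _; rewrite lee_fin mulr_ge0 ?powR_ge0 // mulr_ge0 ?expR_ge0 ?(ltW lam0) //.
  + apply: measurable_funeM; apply/measurable_EFinP; apply: measurable_funM => //.
    apply: measurableT_comp => //.
  + exact: mhg.
  + move=> x; rewrite /= in_itv /= andbT => xt.
    rewrite hgE //; last by apply: le_trans xt; exact: ltW.
    rewrite -EFinM lee_fin ler_wpM2r //.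
      by rewrite mulr_ge0 ?expR_ge0 ?(ltW lam0).
    apply: ge0_ler_powR; rewrite ?nnegrE ?mulr_ge0 ?(ltW lam0) ?subr_ge0 //.
    + exact: ltW.
    + by apply: le_trans xt; exact: ltW.
    + by rewrite ler_wpM2l // ltW.
- by move=> x _; rewrite lee_fin mulr_ge0 ?expR_ge0 ?(ltW lam0).
- apply/measurable_EFinP; apply: measurable_funM => //.
  apply: measurableT_comp => //.
- by rewrite /r powR_ge0.
Qed.


Lemma itv_split (tau : R) : 0 <= tau ->
  `[0%R, +oo[%classic = `[0%R, tau]%classic `|` `]tau, +oo[%classic.
Proof.
move=> t0; apply/seteqP; split => x /=; rewrite !in_itv /= ?andbT.
  move=> x0; case: (lerP x tau) => xt; [left|right] => //.
  by apply/andP.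
by case=> [/andP[]//|tx]; apply: le_trans (ltW tx).
Qed.

Lemma gamma_mlr k lam tau : 1 <= k -> 0 < lam -> 0 < tau ->
  (\int[mu]_(s in `[0%R, tau]) (hg k lam s)%:E <=
   (1 - expR (- lam * tau))%:E * \int[mu]_(s in `[0%R, +oo[) (hg k lam s)%:E)%E.
Proof.
move=> k1 lam0 tau0.
rewrite (itv_split (ltW tau0)) ge0_integral_setU //; last first.
- apply/disj_setPS => x [] /=; rewrite !in_itv /= => /andP[_ xt] /andP[tx _].
  by move: (le_lt_trans xt tx); rewrite ltxx.
- by move=> x _; rewrite lee_fin hg_ge0.
- exact: mhg.
have A1 := I1_le k1 lam0 tau0.
have B1 := I2_ge k1 lam0 tau0.
set r := powR (lam * tau) (k - 1) in A1 B1.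
set p := expR (- lam * tau) in A1 B1 *.
have p0 : 0 < p by rewrite /p expR_gt0.
have p1 : p < 1 by rewrite /p expR_lt1 mulNr oppr_lt0 mulr_gt0.
have r0 : 0 <= r by rewrite /r powR_ge0.
have A0 : (0 <= \int[mu]_(s in `[0%R, tau]) (hg k lam s)%:E)%E.
  by apply: integral_ge0 => x _; rewrite lee_fin hg_ge0.
have B0 : (0 <= \int[mu]_(s in `]tau, +oo[) (hg k lam s)%:E)%E.
  by apply: integral_ge0 => x _; rewrite lee_fin hg_ge0.
move: A0 A1 B0 B1.
set A := (\int[mu]_(s in `[0%R, tau]) _)%E.
set B := (\int[mu]_(s in `]tau, +oo[) _)%E.
case: A => [a||] //; case: B => [b||] // A0 A1 B0 B1.
- rewrite -EFinD -EFinM lee_fin; rewrite !lee_fin in A0 A1 B0 B1.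
  nra.
- by rewrite addey // gt0_muley ?leey // lte_fin subr_gt0.
Qed.


Lemma kernel_le (kf lf : R -> R) (c x tau : R) : 1 <= kf x -> 0 < lf x -> lf x <= c ->
  0 <= tau -> (gamma_kernel kf lf x tau <= (1 - expR (- (c * tau)))%:E)%E.
Proof.
move=> k1 lam0 lamc; rewrite le_eqVlt => /predU1P[<-|tau0].
  by rewrite /gamma_kernel set_itv1 integral_set1 mulr0 oppr0 expR0 subrr.
rewrite /gamma_kernel.
set k := kf x in k1 *; set lam := lf x in lam0 lamc *.
have pc : expR (- (c * tau)) <= expR (- lam * tau).
  by rewrite ler_expR mulNr lerN2 ler_wpM2r // ltW.
set G := GammaF k.
have -> : (\int[mu]_(s in `[0%R, tau]) (gamma_density k lam s)%:E =
           \int[mu]_(s in `[0%R, tau]) ((hg k lam s)%:E * (G^-1)%:E))%E.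
  apply: eq_integral => s; rewrite inE /= in_itv /= => /andP[s0 _].
  by rewrite /gamma_density s0 /hg -EFinM.
rewrite ge0_integralZr //; last 3 first.
- exact: mhg.
- by move=> s _; rewrite lee_fin hg_ge0.
- have : 0 <= G.
    rewrite /G /GammaF fine_ge0 // integral_ge0 // => t _.
    by rewrite lee_fin mulr_ge0 ?powR_ge0 ?expR_ge0.
  by rewrite lee_fin invr_ge0.
have [->|G0] := eqVneq G 0.
  by rewrite invr0 mule0 lee_fin subr_ge0 expR_le1 oppr_le0 mulr_ge0 // ?ltW // (lt_le_trans lam0 lamc).
have IE : (\int[mu]_(s in `[0%R, +oo[) (hg k lam s)%:E)%E = G%:E.
  have E1 := gamma_subst k1 lam0.
  have : GammaF k = fine (\int[mu]_(u in `[0%R, +oo[) (gf k u)%:E)%E by [].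
  rewrite E1 -/G => GE.
  rewrite GE fineK //.
  apply: contraNT G0; rewrite GE.
  rewrite fin_numE negb_and !negbK => /orP[/eqP->|/eqP->] //.
have M := gamma_mlr k1 lam0 tau0.
rewrite IE in M.
have Gp : 0 < G.
  rewrite lt_neqAle eq_sym G0 /= /G /GammaF fine_ge0 // integral_ge0 // => t _.
  by rewrite lee_fin mulr_ge0 ?powR_ge0 ?expR_ge0.
have J0 : (0 <= \int[mu]_(s in `[0%R, tau]) (hg k lam s)%:E)%E.
  by apply: integral_ge0 => t _; rewrite lee_fin hg_ge0.
move: J0 M; set J := (\int[mu]_(s in `[0%R, tau]) _)%E.
case: J => [j||] //= J0 M.
  rewrite -EFinM lee_fin; rewrite -EFinM lee_fin in M J0.
  rewrite ler_pdivrMr //.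
  apply: le_trans M _.
  rewrite ler_wpM2r; [ by [] | exact: ltW | lra].
Qed.


Lemma gamma_kernel_ge0 (kf lf : R -> R) x tau : (0 <= gamma_kernel kf lf x tau)%E.
Proof.
apply: integral_ge0 => s _; rewrite lee_fin /gamma_density; case: ifP => // _.
apply: divr_ge0; first by rewrite !mulr_ge0 ?powR_ge0 ?expR_ge0.
rewrite /GammaF fine_ge0 // integral_ge0 // => u _.
by rewrite lee_fin mulr_ge0 ?powR_ge0 ?expR_ge0.
Qed.

End G.
Lemma le_integral_nm d (T : measurableType d) (R : realType) (mu : {measure set T -> \bar R})
  (D : set T) (f1 f2 : T -> \bar R) :
  (forall x, D x -> (0 <= f1 x)%E) -> (forall x, D x -> (f1 x <= f2 x)%E) ->
  (\int[mu]_(x in D) f1 x <= \int[mu]_(x in D) f2 x)%E.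
Proof.
move=> f10 f12.
have f20 x : D x -> (0 <= f2 x)%E by move=> Dx; apply: le_trans (f10 _ Dx) (f12 _ Dx).
rewrite /integral /=.
have N (f : T -> \bar R) : (forall x, D x -> (0 <= f x)%E) -> ((f \_ D)^\- = cst 0)%E.
  move=> f0; apply/funext => x; rewrite funenegE /patch /=.
  case: ifP => [/set_mem Dx|_]; last by rewrite oppe0 maxxx.
  by apply/max_idPr; rewrite leeNl oppe0 f0.
rewrite (N _ f10) (N _ f20).
apply: leeB => //.
apply: ereal_sup_le => _ [h hle <-]; exists h => //= x.
apply: le_trans (hle x) _.
rewrite !funeposE /patch /=; case: ifP => [/set_mem Dx|_] //.
by rewrite (max_idPl (f10 _ Dx)) (max_idPl (f20 _ Dx)) f12.
Qed.

Section Hist.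
Context d (Omega : measurableType d) (R : realType) (X : nat -> Omega -> R).
Hypothesis mX : forall n, measurable_fun setT (X n).

Definition Hn n A := history X n A.

Definition gen n : set (set Omega) := [set A | exists i : nat, (i <= n)%N /\
        exists B : set R, measurable B /\ A = X i @^-1` B].

Lemma historyE n : history X n = <<s gen n >>.
Proof. by []. Qed.

Lemma history_meas n A : Hn n A -> measurable A.
Proof.
rewrite /Hn historyE; apply: smallest_sub; first exact: sigma_algebra_measurable.
move=> _ [i [_ [B [mB ->]]]].
by rewrite -[X i @^-1` B]setTI; apply: mX.
Qed.

Lemma historyI n A B : Hn n A -> Hn n B -> Hn n (A `&` B).
Proof.
rewrite /Hn !historyE => hA hB.
exact: (@measurableI _ (g_sigma_algebraType (gen n)) A B hA hB).
Qed.

Lemma history_gen n (B : set R) : measurable B -> Hn n (X n @^-1` B).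
Proof.
move=> mB; rewrite /Hn historyE; apply: sub_gen_smallest.
by exists n; split => //; exists B.
Qed.

Lemma historyS n A : Hn n A -> Hn n.+1 A.
Proof.
rewrite /Hn !historyE; apply: sub_smallest2r; first exact: smallest_sigma_algebra.
by move=> _ [i [ni [B [mB ->]]]]; exists i; split => //; [exact: leqW | exists B].
Qed.

Lemma historyT n : Hn n setT.
Proof.
rewrite /Hn historyE; exact: (@measurableT _ (g_sigma_algebraType (gen n))).
Qed.

End Hist.

Section Pr.
Context d (Omega : measurableType d) (R : realType) (P : probability Omega R).

Definition pr (A : set Omega) : R := fine (P A).

Lemma prE A : measurable A -> P A = (pr A)%:E.
Proof. move=> mA; rewrite /pr fineK; first by []. exact: (@fin_num_measure _ _ _ P A mA). Qed.

Lemma pr_ge0 A : 0 <= pr A.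
Proof. by rewrite /pr fine_ge0. Qed.

Lemma pr_le A B : measurable A -> measurable B -> A `<=` B -> pr A <= pr B.
Proof.
move=> mA mB AB; rewrite -lee_fin -!prE //; exact: (le_measure _ (mem_set mA) (mem_set mB) AB).
Qed.

Lemma prU A B : measurable A -> measurable B -> A `&` B = set0 ->
  pr (A `|` B) = pr A + pr B.
Proof.
move=> mA mB AB.
apply/eqP; rewrite -eqe EFinD -!prE //; last exact: measurableU.
by rewrite measureU.
Qed.

Lemma pr0 : pr set0 = 0.
Proof. by rewrite /pr measure0. Qed.

Lemma prT : pr setT = 1.
Proof. by rewrite /pr probability_setT. Qed.

End Pr.

Section Proc.
Context d (Omega : measurableType d) (R : realType) (P : probability Omega R).
Variables (X : nat -> Omega -> R) (c h : R).
Hypothesis mX : forall n, measurable_fun setT (X n).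
Hypothesis Xinc : forall n w, X n w <= X n.+1 w.
Hypothesis c0 : 0 < c.
Hypothesis h0 : 0 < h.
Hypothesis Hb : forall n A tau, Hn X n A -> 0 <= tau ->
  pr P (A `&` [set w | X n.+1 w - X n w <= tau]) <= (1 - expR (- (c * tau))) * pr P A.

Let p := expR (- (c * h)).
Let q := (1 - p) / p.

Let p0 : 0 < p. Proof. exact: expR_gt0. Qed.
Let p1 : p < 1. Proof. by rewrite /p expR_lt1 oppr_lt0 mulr_gt0. Qed.
Let q0 : 0 <= q. Proof. by rewrite /q divr_ge0 ?subr_ge0 // ltW. Qed.

Lemma Xmono m n w : (m <= n)%N -> X m w <= X n w.
Proof.
elim: n => [|n IH]; first by rewrite leqn0 => /eqP ->.
rewrite leq_eqVlt => /orP[/eqP -> //|]; rewrite ltnS => mn.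
exact: le_trans (IH mn) (Xinc _ _).
Qed.

Lemma set_lt n y : [set w | X n w < y] = X n @^-1` `]-oo, y[.
Proof. by apply/seteqP; split => w /=; rewrite in_itv. Qed.

Lemma set_ge n y : [set w | y <= X n w] = X n @^-1` `[y, +oo[.
Proof. by apply/seteqP; split => w /=; rewrite in_itv /= andbT. Qed.

Lemma m_lt n y : measurable [set w | X n w < y].
Proof. by rewrite set_lt -[X n @^-1` _]setTI; apply: mX. Qed.

Lemma m_ge n y : measurable [set w | y <= X n w].
Proof. by rewrite set_ge -[X n @^-1` _]setTI; apply: mX. Qed.

Lemma h_lt n y : Hn X n [set w | X n w < y].
Proof. by rewrite set_lt; apply: history_gen. Qed.

Lemma h_ge n y : Hn X n [set w | y <= X n w].
Proof. by rewrite set_ge; apply: history_gen. Qed.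

Definition S nn k A y := \sum_(m < nn) pr P (A `&` [set w | X (k + m.+1)%N w < y]).

Lemma S_ge0 nn k A y : 0 <= S nn k A y.
Proof. by apply: sumr_ge0 => i _; exact: pr_ge0. Qed.

Lemma SU nn k A1 A2 y : measurable A1 -> measurable A2 -> A1 `&` A2 = set0 ->
  S nn k (A1 `|` A2) y = S nn k A1 y + S nn k A2 y.
Proof.
move=> m1 m2 dj; rewrite /S -big_split /=; apply: eq_bigr => i _.
rewrite setIUl prU //; try exact: measurableI (m_lt _ _).
by rewrite setIACA dj set0I.
Qed.

Lemma S0 nn k A y : (forall w, A w -> y <= X k w) -> S nn k A y = 0.
Proof.
move=> Ay; rewrite /S big1 // => i _.
rewrite (_ : _ `&` _ = set0) ?pr0 //; apply/seteqP; split => // w [/Ay yX /=].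
by rewrite ltNge (le_trans yX) // Xmono // leq_addr.
Qed.


Lemma alg r : (1 - p ^+ r) + q * \sum_(i < r) (1 - p ^+ i.+1) = q * r%:R.
Proof.
have E : q * p = 1 - p by rewrite /q mulfVK // gt_eqF.
elim: r => [|r IH]; first by rewrite big_ord0 expr0 subrr mulr0 add0r.
rewrite big_ord_recr /= mulrDr exprSr -addn1 natrD.
set a := p ^+ r in IH *.
have E2 : q * (1 - a * p) = q - a * (q * p) by ring.
rewrite E2 E; lra.
Qed.


Lemma Sl nn k1 (IH : forall L r A, Hn X k1 A -> (forall w, A w -> L <= X k1 w) ->
    S nn k1 A (L + r%:R * h) <= q * r%:R * pr P A) :
  forall r L A, Hn X k1 A -> (forall w, A w -> L <= X k1 w) ->
  S nn k1 A (L + r%:R * h) <=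
    q * \sum_(i < r) pr P (A `&` [set w | X k1 w < L + (i.+1)%:R * h]).
Proof.
elim=> [|r IHr] L A hA AL.
  by rewrite big_ord0 mulr0 mul0r addr0 S0.
set A1 := A `&` [set w | X k1 w < L + h].
set A2 := A `&` [set w | L + h <= X k1 w].
have hA1 : Hn X k1 A1 by exact: (historyI hA (h_lt _)).
have hA2 : Hn X k1 A2 by exact: (historyI hA (h_ge _)).
have mA1 : measurable A1 by apply: history_meas hA1.
have mA2 : measurable A2 by apply: history_meas hA2.
have AU : A = A1 `|` A2.
  rewrite -setIUr (_ : _ `|` _ = setT) ?setIT //.
  apply/seteqP; split => // w _ /=; case: (ltP (X k1 w) (L + h)); by [left|right].
have dj : A1 `&` A2 = set0.
  apply/seteqP; split => // w [[_ /= lt] [_ /= ge]].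
  by move: (lt_le_trans lt ge); rewrite ltxx.
rewrite {1}AU SU //.
have B1 : S nn k1 A1 (L + r.+1%:R * h) <= q * r.+1%:R * pr P A1.
  by apply: IH => // w [/AL].
have B2 : S nn k1 A2 (L + r.+1%:R * h) <=
    q * \sum_(i < r) pr P (A2 `&` [set w | X k1 w < (L + h) + (i.+1)%:R * h]).
  rewrite (_ : L + r.+1%:R * h = (L + h) + r%:R * h); last first.
    by rewrite -addn1 natrD; ring.
  by apply: IHr => // w [].
have E i : pr P (A `&` [set w | X k1 w < L + (i.+2)%:R * h]) =
    pr P A1 + pr P (A2 `&` [set w | X k1 w < (L + h) + (i.+1)%:R * h]).
  rewrite (_ : (L + h) + (i.+1)%:R * h = L + (i.+2)%:R * h); last first.
    by rewrite -(addn1 i.+1) natrD; ring.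
  rewrite {1}AU setIUl (_ : A1 `&` _ = A1); last first.
    apply/seteqP; split => [w []//|w A1w]; split => //.
    case: A1w => _ /= lt; apply: (lt_le_trans lt).
    by rewrite lerD2l -{1}(mul1r h) ler_wpM2r ?ler1n // ltW.
  rewrite prU //; first exact: measurableI (m_lt _ _).
  by rewrite setIA dj set0I.
rewrite big_ord_recl /= mul1r.
under eq_bigr => i _ do rewrite /bump /= E.
rewrite big_split /= sumr_const card_ord.
move: B1 B2; set s1 := S _ _ A1 _; set s2 := S _ _ A2 _; set Sg := \sum_(i < r) _.
rewrite -mulr_natl -addn1 natrD => B1 B2.
have : q * (r%:R + 1) * pr P A1 = q * pr P A1 + q * (r%:R * pr P A1) by ring.
lra.
Qed.


Lemma Hb_level k A L i : Hn X k A -> (forall w, A w -> L <= X k w) ->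
  pr P (A `&` [set w | X k.+1 w < L + i%:R * h]) <= (1 - p ^+ i) * pr P A.
Proof.
move=> hA AL.
have mA := history_meas mX hA.
have := @Hb k A (i%:R * h) hA (mulr_ge0 (ler0n _ _) (ltW h0)).
rewrite (_ : expR (- (c * (i%:R * h))) = p ^+ i); last first.
  by rewrite /p -expRM_natl; congr expR; ring.
apply: le_trans; apply: pr_le.
- exact: measurableI (m_lt _ _).
- apply: measurableI => //; rewrite (_ : [set w | _] = (fun w => X k.+1 w - X k w) @^-1` `]-oo, i%:R * h]).
    rewrite -[_ @^-1` _]setTI; apply: measurable_funB => //.
  by apply/seteqP; split => w /=; rewrite in_itv.
- move=> w [Aw /= lt]; split => //=.
  have := AL _ Aw; lra.
Qed.


Lemma claim nn : forall k L r A, Hn X k A -> (forall w, A w -> L <= X k w) ->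
  S nn k A (L + r%:R * h) <= q * r%:R * pr P A.
Proof.
elim: nn => [|nn IH] k L r A hA AL.
  by rewrite /S big_ord0; apply: mulr_ge0; [apply: mulr_ge0 => //; exact: ler0n | exact: pr_ge0].
rewrite /S big_ord_recl /= addn1.
have -> : \sum_(i < nn) pr P (A `&` [set w | X (k + (bump 0 i).+1)%N w < L + r%:R * h])
    = S nn k.+1 A (L + r%:R * h).
  by apply: eq_bigr => i _; rewrite /bump /= add1n addSnnS.
have hA' := historyS hA.
have AL' : forall w, A w -> L <= X k.+1 w.
  by move=> w /AL /le_trans; apply; exact: Xinc.
have SL := @Sl nn k.+1 (IH k.+1) r L A hA' AL'.
have B0 := Hb_level r hA AL.
have Bs : \sum_(i < r) pr P (A `&` [set w | X k.+1 w < L + (i.+1)%:R * h]) <=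
    (\sum_(i < r) (1 - p ^+ i.+1)) * pr P A.
  rewrite big_distrl /=; apply: ler_sum => i _; exact: Hb_level.
have := alg r.
move: SL B0 Bs.
set s1 := pr P _; set s2 := S _ _ _ _; set s3 := \sum_(i < r) pr P _; set s4 := \sum_(i < r) _.
move=> SL B0 Bs Alg.
have : q * s3 <= q * (s4 * pr P A) by rewrite ler_wpM2l.
rewrite -Alg.
have -> : q * (s4 * pr P A) = (q * s4) * pr P A by ring.
have : 0 <= pr P A by exact: pr_ge0.
nra.
Qed.

End Proc.

Section Fin.
Context d (Omega : measurableType d) (R : realType) (P : probability Omega R).
Variables (X : nat -> Omega -> R) (c : R).
Hypothesis mX : forall n, measurable_fun setT (X n).
Hypothesis X0 : forall w, X 0 w = 0.
Hypothesis Xinc : forall n w, X n w <= X n.+1 w.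
Hypothesis c0 : 0 < c.
Hypothesis Hb : forall n A tau, Hn X n A -> 0 <= tau ->
  pr P (A `&` [set w | X n.+1 w - X n w <= tau]) <= (1 - expR (- (c * tau))) * pr P A.

Let f m t := pr P [set w | X m w <= t].

Lemma m_le m t : measurable [set w | X m w <= t].
Proof.
rewrite (_ : [set w | _] = X m @^-1` `]-oo, t]); last first.
  by apply/seteqP; split => w /=; rewrite in_itv.
by rewrite -[X m @^-1` _]setTI; apply: mX.
Qed.

Lemma pair_sum t N : \sum_(n < N) (f n.*2.+1 t + f n.*2.+2 t) = \sum_(m < N.*2) f m.+1 t.
Proof.
elim: N => [|N IH]; first by rewrite !big_ord0.
by rewrite big_ord_recr /= IH doubleS !big_ord_recr /= addrA.
Qed.

Lemma sum_lt_bound t' K : 0 < t' -> (0 < K)%N -> forall M,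
  \sum_(m < M) pr P [set w | X m.+1 w < t'] <=
  (1 - expR (- (c * (t' / K%:R)))) / expR (- (c * (t' / K%:R))) * K%:R.
Proof.
move=> t0 K0 M.
have h0 : 0 < t' / K%:R by rewrite divr_gt0 // ltr0n.
have := @claim d Omega R P X c (t' / K%:R) mX Xinc c0 h0 Hb M 0 0 K setT (@historyT _ _ _ X 0) _.
rewrite add0r mulrC divfK ?pnatr_eq0 -?lt0n // prT mulr1.
rewrite /S.
under eq_bigr => i _ do rewrite add0n setTI.
apply.
by move=> w _; rewrite X0.
Qed.


Lemma f_ge0 m t : 0 <= f m t. Proof. exact: pr_ge0. Qed.

Lemma partial_bound t : 0 < t -> forall N, \sum_(n < N) f (n.+1).*2 t <= c * t.
Proof.
move=> t0 N.
set t' := 3 / 2 * t.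
have t'0 : 0 < t' by rewrite /t'; apply: mulr_gt0 => //.
set K := (Num.trunc (6 * c * t)).+1.
have K0 : (0 < K)%N by [].
have KK : 6 * c * t < K%:R by rewrite /K; exact: truncnS_gt.
have Kp : 0 < K%:R :> R by rewrite ltr0n.
have B := sum_lt_bound t'0 K0 N.*2.
set w := c * (t' / K%:R) in B.
set p := expR (- w) in B.
have wE : w * K%:R = c * t' by rewrite /w mulrA divfK // gt_eqF.
have w0 : 0 <= w by rewrite /w mulr_ge0 ?divr_ge0 // ltW.
have w4 : w <= 1 / 4.
  have : w * K%:R <= 1 / 4 * K%:R by rewrite wE /t'; lra.
  by rewrite ler_pM2r.
have p0 : 0 < p by rewrite /p expR_gt0.
have pw : 1 - w <= p by have := expR_ge1Dx (- w); rewrite /p; lra.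
set q := (1 - p) / p in B.
have qp : q * p = 1 - p by rewrite /q mulfVK // gt_eqF.
have q0 : 0 <= q.
  rewrite /q divr_ge0 // ?(ltW p0) // subr_ge0 /p expR_le1 oppr_le0 //.
have Kq : K%:R * q <= 2 * (c * t).
  have h1 : q * (1 - w) <= q * p by rewrite ler_wpM2l.
  have h2 : K%:R * (q * (1 - w)) <= K%:R * w.
    apply: ler_wpM2l; [exact: ltW | lra].
  have : K%:R * w = c * t' by rewrite mulrC.
  rewrite /t' => h3.
  nra.
have step1 : \sum_(n < N) f (n.+1).*2 t <= 1 / 2 * \sum_(m < N.*2) f m.+1 t.
  rewrite -pair_sum big_distrr /=; apply: ler_sum => n _.
  rewrite doubleS.
  have : f n.*2.+2 t <= f n.*2.+1 t.
    apply: pr_le; [exact: m_le | exact: m_le | move=> w' /= le].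
    by apply: le_trans le; exact: Xinc.
  lra.
have step2 : \sum_(m < N.*2) f m.+1 t <= \sum_(m < N.*2) pr P [set w | X m.+1 w < t'].
  apply: ler_sum => m _; apply: pr_le; [exact: m_le | exact: m_lt | move=> w' /= le].
  by apply: le_lt_trans le _; rewrite /t'; lra.
rewrite mulrC in B.
lra.
Qed.


Lemma f_zero m : (0 < m)%N -> f m 0 <= 0.
Proof.
move=> m0.
have := @Hb 0 setT 0 (@historyT _ _ _ X 0) (lexx 0).
rewrite mulr0 oppr0 expR0 subrr mul0r.
apply: le_trans; apply: pr_le; first exact: m_le.
  apply: measurableI => //.
  rewrite (_ : [set w | _] = (fun w => X 1%N w - X 0%N w) @^-1` `]-oo, 0]).
    rewrite -[_ @^-1` _]setTI; apply: measurable_funB => //.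
  by apply/seteqP; split => w /=; rewrite in_itv.
move=> w /= le; split => //=.
rewrite X0 subr0; apply: le_trans le; exact: Xmono.
Qed.

Lemma final_bound t : 0 <= t -> (renewal_function P X t <= (c * t)%:E)%E.
Proof.
move=> t0; rewrite /renewal_function.
apply: lime_le.
  by apply: is_cvg_nneseries => n _ _; exact: measure_ge0.
apply: nearW => N /=.
rewrite (_ : (\sum_(1 <= n < N) P [set w | (X n.*2 w <= t)%R])%E =
             (\sum_(1 <= n < N) f n.*2 t)%:E); last first.
  rewrite -sumEFin; apply: eq_bigr => n _; rewrite prE //; exact: m_le.
rewrite lee_fin big_add1 big_mkord.
move: t0; rewrite le_eqVlt => /predU1P[<-|tp].
  rewrite mulr0; apply: sumr_le0 => n _; apply: f_zero.
  by rewrite double_gt0.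
exact: partial_bound.
Qed.

End Fin.

Theorem corollary1 (d : measure_display) (Omega : measurableType d)
    (R : realType) (P : probability Omega R) (X : nat -> Omega -> R)
    (kY kZ lamY lamZ : R -> R) (c : R) :
  measurable_fun setT kY -> measurable_fun setT kZ ->
  measurable_fun setT lamY -> measurable_fun setT lamZ ->
  (forall x, 0 <= x -> 1 <= kY x) -> (forall x, 0 <= x -> 1 <= kZ x) ->
  (forall x, 0 <= x -> 0 < lamY x) -> (forall x, 0 <= x -> 0 < lamZ x) ->
  0 < c ->
  (forall x, 0 <= x -> lamY x <= c) -> (forall x, 0 <= x -> lamZ x <= c) ->
  alt_semi_markov P X (gamma_kernel kY lamY) (gamma_kernel kZ lamZ) ->
  forall t : R, 0 <= t -> (renewal_function P X t <= (c * t)%:E)%E.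
Proof.
move=> _ _ _ _ kY1 kZ1 lY0 lZ0 c0 lYc lZc [mX [X0 [Xinc HM]]] t t0.
have Xge0 n w : 0 <= X n w.
  elim: n => [|n IH]; first by rewrite X0.
  exact: le_trans IH (Xinc _ _).
apply: (final_bound mX X0 Xinc c0 _ t0).
move=> n A tau hA tau0.
have mA := history_meas mX hA.
have mE : measurable [set w | X n.+1 w - X n w <= tau].
  rewrite (_ : [set w | _] = (fun w => X n.+1 w - X n w) @^-1` `]-oo, tau]).
    rewrite -[_ @^-1` _]setTI; apply: measurable_funB => //.
  by apply/seteqP; split => w /=; rewrite in_itv.
rewrite -lee_fin EFinM -!prE //; last exact: measurableI.
rewrite HM //.
apply: le_trans (@le_integral_nm _ _ _ P A _ (cst (1 - expR (- (c * tau)))%:E) _ _) _.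
- move=> w _; case: ifP => _; exact: gamma_kernel_ge0.
- move=> w _ /=; have := Xge0 n w => x0.
  case: ifP => _; apply: kernel_le => //; by [apply: kY1 | apply: lY0 | apply: lYc | apply: kZ1 | apply: lZ0 | apply: lZc].
- by rewrite integral_cst.
Qed.
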